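(* Let $d\ge2$, $p\in[1,\infty)$ and $f\in W^{1,\infty}(\mathbb{R}^d)$ real-valued. Set $\lambda_n=\frac{11}{8}2^n$ and $t_n=\frac{8}{11}\pi n2^{-n}$. Then there is $N_0\in\mathbb{N}^+$ such that for all sufficiently large $n$, $$\big\|\cos\big(\lambda_n(x_1-t_nf(x))\big)\big\|_{L^p([0,2\pi2^{-N_0}]^d)}\ge 2^{-\frac dpN_0-2},$$ where $x=(x_1,\dots,x_d)$. *)

(* Defs.v *)
From HB Require Import structures.
From mathcomp Require Import all_boot all_order all_algebra.
From mathcomp Require Import all_classical all_reals all_analysis.
Set Implicit Arguments. Unset Strict Implicit. Unset Printing Implicit Defensive.
Import Order.TTheory GRing.Theory Num.Theory.
Import numFieldNormedType.Exports.
Local Open Scope classical_set_scope.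
Local Open Scope ring_scope.

(* A point of R^d is represented, for integration purposes, by its coordinate
   function x : nat -> R (coordinates 0..d-1 are used; x 0 is the paper's x_1). *)
Definition vec {R : realType} (d : nat) (x : nat -> R) : 'rV[R]_d :=
  \row_(i < d) x i.

(* Iterated Lebesgue integral over the cube [a,b]^k of g, integrating
   coordinates 0, ..., k-1 (other coordinates set to 0). *)
Fixpoint cube_int {R : realType} (k : nat) (a b : R)
    (g : (nat -> R) -> \bar R) : \bar R :=
  match k with
  | 0 => g (fun _ => 0)
  | k'.+1 =>
      (\int[@lebesgue_measure R]_(t in `[a, b]) 
          cube_int k' a b (fun x => g (fun i => if i == k' then t else x i)))%E
  end.

Definition Lp_norm_cube {R : realType} (d : nat) (p L : R)
    (g : (nat -> R) -> R) : \bar R :=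
  ((cube_int d 0 L (fun x => ((`|g x|) `^ p)%:E)) `^ p^-1)%E.

(* W^{1,oo}(R^d), real valued: (the continuous representative is) bounded and
   Lipschitz. *)
Definition W1inf {R : realType} (d : nat) (f : 'rV[R]_d -> R) : Prop :=
  (exists M : R, forall x, `|f x| <= M) /\
  (exists K : R, forall x y, `|f x - f y| <= K * `|x - y|).

Definition lambda_seq {R : realType} (n : nat) : R := (11 / 8) * 2 ^+ n.
Definition t_seq {R : realType} (n : nat) : R := (8 / 11) * pi * n%:R / 2 ^+ n.

(* Main.v *)
Require Import Defs.
From HB Require Import structures.
From mathcomp Require Import all_boot all_order all_algebra.
From mathcomp Require Import all_classical all_reals all_analysis.
From mathcomp Require Import ring lra.
From mathcomp Require Import measurable_realfun.
From mathcomp Require Import zify.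
Import Order.TTheory GRing.Theory Num.Theory.
Import numFieldNormedType.Exports.
Local Open Scope ring_scope.

Section Helpers_S.
Local Open Scope classical_set_scope.

Context {R : realType}.
Local Notation mu := (@lebesgue_measure R).

Lemma mshift (s : R) : measurable_fun [set: R] (fun x : R => x + s).
Proof. by apply: measurable_realfun.measurable_funD => //. Qed.

Lemma lebesgue_shift (s : R) (A : set R) : measurable A ->
  pushforward mu ((fun x : R => x + s) : _ -> measurableTypeR R) A = mu A.
Proof.
move=> mA; apply/esym/lebesgue_measure_unique => //; first exact: mshift.
move=> ms _ [[a b]] _ <-.
transitivity (mu ((fun x : R => x + s) @^-1` `]a, b]%classic)); last by [].
have -> : (fun x : R => x + s) @^-1` `]a, b]%classic = `]a - s, b - s]%classic.
  apply/seteqP; split => x /=; rewrite !in_itv/= ; by rewrite ?lerBrDr ?ltrBlDr.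
rewrite !lebesgue_measure_itv/= !lte_fin ltrBlDr subrK.
by case: ifP => // _; rewrite -!EFinB; congr (_%:E); ring.
Qed.

Lemma integral_shift (s a b : R) (h : R -> R) : measurable_fun setT h ->
  (forall x, 0 <= h x) ->
  (\int[mu]_(x in `[a, b]) (h (x + s)%R)%:E)%E =
   (\int[mu]_(x in `[(a + s)%R, (b + s)%R]) (h x)%:E)%E.
Proof.
move=> mh h0.
have := @ge0_integral_pushforward _ _ (measurableTypeR R) (measurableTypeR R) R ((fun x : R => x + s) : _ -> measurableTypeR R)
  (mshift s) mu `[(a + s)%R, (b + s)%R]%classic (EFin \o h) (measurable_itv _) _ _.
move=> /(_ _ _) H.
have pre : (fun x : R => x + s) @^-1` `[(a + s)%R, (b + s)%R]%classic = `[a, b]%classic.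
  apply/seteqP; split => x /=; rewrite !in_itv/= ?lerD2r //.
rewrite pre in H.
rewrite (_ : (\int[mu]_(x in `[a, b]) (h (x + s)%R)%:E)%E = (\int[mu]_(x in `[a, b]) ((EFin \o h) \o (fun x : R => (x + s)%R)) x)%E) //.
rewrite -H; last 2 first.
- by apply/measurable_realfun.measurable_EFinP; exact: measurable_funS mh.
- by move=> x _; rewrite /= lee_fin.
apply: eq_measure_integral; first exact: mshift.
by move=> ? A mA _; exact: lebesgue_shift.
Qed.

Lemma le_integral_nm (D : set R) (f1 f2 : R -> \bar R) :
  (forall x, D x -> (0 <= f1 x)%E) -> (forall x, D x -> (f1 x <= f2 x)%E) ->
  (\int[mu]_(x in D) f1 x <= \int[mu]_(x in D) f2 x)%E.
Proof.
move=> f10 f12.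
have f20 : forall x, D x -> (0 <= f2 x)%E by move=> x Dx; exact: le_trans (f10 x Dx) (f12 x Dx).
rewrite !ge0_integralE //.
apply: le_ereal_sup => _ [g /= Hg <-]; exists g => //= x.
apply: le_trans (Hg x) _; rewrite /patch; case: ifP => // /set_mem Dx.
exact: f12.
Qed.

Lemma integral_cst_itv (a b c : R) : a < b ->
  (\int[mu]_(x in `[a, b]) (c%:E))%E = (c * (b - a))%:E.
Proof.
move=> ab; rewrite integral_cst//= lebesgue_measure_itv/= lte_fin ab.
by rewrite -EFinB -EFinM.
Qed.

Lemma cube_lb (a b m : R) (k : nat) (G : (nat -> R) -> \bar R) :
  a < b -> 0 <= m ->
  (forall x, (m%:E <= \int[mu]_(t in `[a, b]) G (fun i => if i == 0%N then t else x i))%E) ->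
  ((m * (b - a) ^+ k)%:E <= cube_int k.+1 a b G)%E.
Proof.
move=> ab m0; elim: k G => [|k IH] G HG.
  by rewrite expr0 mulr1 /=; exact: HG.
rewrite [cube_int _ _ _ _]/=.
have -> : (m * (b - a) ^+ k.+1)%:E = (\int[mu]_(t in `[a, b]) ((m * (b - a) ^+ k)%:E))%E.
  by rewrite integral_cst_itv // exprS; congr (_%:E); ring.
apply: le_integral_nm.
  by move=> x _; rewrite lee_fin mulr_ge0 // exprn_ge0 // subr_ge0 ltW.
move=> t _; apply: (IH (fun x => G (fun i => if i == k.+1 then t else x i))) => x.
have := HG (fun i => if i == k.+1 then t else x i).
congr (_ <= _)%E; apply: eq_integral => t' _; congr (G _).
by apply/funext => i; case: eqP => [->//|//].
Qed.
End Helpers_S.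

Section Helpers_T.
Local Open Scope classical_set_scope.

Context {R : realType}.

Lemma sin_lip (x y : R) : `|sin x - sin y| <= `|x - y|.
Proof.
wlog xy : x y / x < y.
  move=> W; have [xy|yx|->] := ltgtP x y.
  - exact: W.
  - by rewrite distrC [`|x - y|]distrC; exact: W.
  - by rewrite !subrr normr0.
have [c _ Hc] := @MVT R sin cos x y xy (fun c _ => is_derive_sin c)
  (continuous_subspaceT (@continuous_sin R)).
rewrite distrC [`|x - y|]distrC Hc normrM ler_piMl //.
exact: cos_max.
Qed.

Lemma cos_lip (x y : R) : `|cos x - cos y| <= `|x - y|.
Proof.
rewrite -!sinDpihalf; apply: le_trans (sin_lip _ _) _.
by rewrite opprD addrACA subrr addr0.
Qed.

Lemma lip_cont (g : R -> R) (K : R) : 0 < K ->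
  (forall x y, `|g x - g y| <= K * `|x - y|) -> continuous g.
Proof.
move=> K0 Hg x; apply/cvgrPdist_lt => e e0; near=> z.
rewrite (le_lt_trans (Hg x z)) // -ltr_pdivlMl //.
near: z; apply: cvgr_dist_lt => //; rewrite mulrC divr_gt0.
Unshelve. all: by end_near. Qed.




Lemma key_point (p th e : R) : 1 <= p -> `|e| <= 3 / 10 ->
  (2^-1) `^ p <= `|cos th| `^ p + `|cos (th + pi / 2 + e)| `^ p.
Proof.
move=> p1 he.
have Hmono : forall u : R, 2^-1 <= u -> (2^-1) `^ p <= u `^ p.
  move=> u hu; apply: ge0_ler_powR => //; first by rewrite (le_trans _ p1).
  - by rewrite nnegrE.
  - by rewrite nnegrE (le_trans _ hu).
have [H|H] := lerP (2^-1) `|cos th|.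
  by apply: le_trans (Hmono _ H) _; rewrite lerDl powR_ge0.
have : 2^-1 <= `|cos (th + pi / 2 + e)|.
  rewrite -addrA (addrC (pi / 2)) addrA cosDpihalf normrN.
  have hs := sin_lip (th + e) th.
  rewrite addrAC subrr add0r in hs.
  have hc := cos2Dsin2 th.
  move: H; rewrite ltr_norml => /andP[H1 H2].
  move: (le_trans hs he); rewrite ler_norml => /andP[H3 H4].
  move: he; rewrite ler_norml => /andP[H5 H6].
  rewrite ler_normr; apply/orP.
  have [s0|s0] := lerP 0 (sin th).
    by left; nra.
  by right; nra.
by move=> H'; apply: le_trans (Hmono _ H') _; rewrite lerDr powR_ge0.
Qed.
End Helpers_T.

Section Helpers_U.
Local Open Scope classical_set_scope.

Context {R : realType}.
Local Notation mu := (@lebesgue_measure R).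

Lemma oneD (p K lam tau : R) (g : R -> R) :
  1 <= p -> 0 < K -> 0 < lam -> 0 <= tau ->
  (forall x y, `|g x - g y| <= K * `|x - y|) ->
  lam * tau * K * (pi / (2 * lam)) <= 3 / 10 ->
  pi / (2 * lam) <= (2^-1) `^ p * pi / 2 ->
  ((((2^-1) `^ p / 4 * pi)%:E) <=
   \int[mu]_(t in `[0%R, pi]) (`|cos (lam * (t - tau * g t))| `^ p)%:E)%E.
Proof.
move=> p1 K0 lam0 tau0 Hg Hs1 Hs2.
set s := pi / (2 * lam).
set c := (2^-1 : R) `^ p.
have s0 : 0 < s by rewrite divr_gt0 ?pi_gt0 // mulr_gt0.
have pi0 := @pi_gt0 R.
set th := fun t => lam * (t - tau * g t).
set u := fun t => `|cos (th t)|.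
set h := fun t => u t `^ p.
have ulip : forall x y, `|u x - u y| <= (lam * (1 + tau * K)) * `|x - y|.
  move=> x y; apply: le_trans (ler_dist_dist _ _) _.
  apply: le_trans (cos_lip _ _) _.
  have -> : th x - th y = lam * ((x - y) + - (tau * (g x - g y))) by rewrite /th; ring.
  rewrite normrM gtr0_norm // -mulrA ler_pM2l //.
  apply: le_trans (ler_normD _ _) _; rewrite normrN normrM ger0_norm //.
  by rewrite mulrDl mul1r lerD2l -mulrA ler_wpM2l.
have ucont : continuous u.
  apply: lip_cont ulip; by rewrite mulr_gt0 // ltr_pwDl // mulr_ge0 // ltW.
have mh : measurable_fun setT h.
  exact: measurableT_comp (measurable_realfun.measurable_powR p) (measurable_realfun.continuous_measurable_fun ucont).
have h0 : forall t, 0 <= h t by move=> t; exact: powR_ge0.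
have h1 : forall t, h t <= 1.
  move=> t; rewrite /h; apply: (@le_trans _ _ (1 `^ p)); last by rewrite powR1.
  apply: ge0_ler_powR; rewrite ?nnegrE //.
  all: try by rewrite (le_trans _ p1).
  all: try by rewrite /u normr_ge0.
  exact: cos_max.
have pt : forall x, c <= h x + h (x + s).
  move=> x; set e := th (x + s) - th x - pi / 2.
  rewrite /h /u (_ : th (x + s) = th x + pi / 2 + e); last by rewrite /e; ring.
  apply: key_point => //.
  have -> : e = - (lam * tau * (g (x + s) - g x)).
    rewrite /e /th /s; field; by rewrite gt_eqF.
  rewrite normrN normrM (ger0_norm (mulr_ge0 (ltW lam0) tau0)).
  apply: le_trans Hs1; rewrite -!mulrA ler_wpM2l ?(ltW lam0) // ler_wpM2l //.
  apply: le_trans (Hg _ _) _; rewrite addrAC subrr add0r gtr0_norm //.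
have mhE : measurable_fun [set: R] (fun t => (h t)%:E) by apply/measurable_realfun.measurable_EFinP.
have mhs : measurable_fun [set: R] (fun t => (h (t + s))%:E).
  apply/measurable_realfun.measurable_EFinP.
  exact: (measurableT_comp mh (mshift s)).
set I := (\int[mu]_(t in `[0%R, pi]) (h t)%:E)%E.
change (((c / 4 * pi)%:E <= I)%E).
have I0 : (0 <= I)%E by apply: integral_ge0 => t _; rewrite lee_fin.
have Ile : (I <= pi%:E)%E.
  apply: le_trans (@le_integral_nm R _ _ (fun _ => 1%:E) _ _) _.
  - by move=> t _; rewrite lee_fin.
  - by move=> t _; rewrite lee_fin.
  - by rewrite integral_cst_itv // mul1r subr0.
have [r Ir] : exists r, I = r%:E.
  by exists (fine I); rewrite fineK // ge0_fin_numE // (le_lt_trans Ile) // ltey.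
set J := (\int[mu]_(t in `[0%R, pi]) (h (t + s))%:E)%E.
have H1 : ((c * pi)%:E <= I + J)%E.
  rewrite /I /J -ge0_integralD //; last 4 first.
  - by move=> t _; rewrite lee_fin.
  - exact: measurable_funTS.
  - by move=> t _; rewrite lee_fin.
  - exact: measurable_funTS.
  have -> : (c * pi)%:E = (\int[mu]_(t in `[0%R, pi]) c%:E)%E.
    by rewrite integral_cst_itv // subr0.
  apply: le_integral_nm => t _; first by rewrite lee_fin powR_ge0.
  by rewrite -EFinD lee_fin pt.
have H2 : (J <= I + s%:E)%E.
  rewrite /J (integral_shift s 0 pi h mh h0) add0r.
  apply: (@le_trans _ _ (\int[mu]_(t in `[0%R, (pi + s)%R]) (h t)%:E)%E).
    apply: ge0_subset_integral => //.
    - exact: measurable_funTS.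
    - by move=> t _; rewrite lee_fin.
    - move=> t /=; rewrite !in_itv/= => /andP[t1 t2].
      by rewrite t2 andbT (le_trans (ltW s0)).
  rewrite (@itv_bndbnd_setU _ _ (BLeft 0%R) (BRight pi) (BRight (pi + s)%R)); last 2 first.
  - by rewrite bnd_simp ltW.
  - by rewrite bnd_simp lerDl ltW.
  rewrite ge0_integral_setU //; last 3 first.
  - exact: measurable_funTS.
  - by move=> t _; rewrite lee_fin.
  - apply/disj_setPS => y [/=]; rewrite 2!in_itv/= => /andP[_ yx] /andP[].
    by move=> /(le_lt_trans yx); rewrite ltxx.
  apply: leeD2l.
  apply: le_trans (@le_integral_nm R _ _ (fun _ => 1%:E) _ _) _.
  - by move=> t _; rewrite lee_fin.
  - by move=> t _; rewrite lee_fin.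
  rewrite integral_cst //= lebesgue_measure_itv/= lte_fin ltrDl s0 mul1e.
  by rewrite -EFinD lee_fin addrC addKr.
rewrite Ir in H1 H2 *.
have H3 : ((c * pi)%:E <= (r + (r + s))%:E)%E.
  apply: le_trans H1 _; rewrite !EFinD; apply: leeD2l; by rewrite -EFinD.
rewrite lee_fin; move: H3; rewrite lee_fin => H3.
move: Hs2; rewrite -/s -/c => Hs2.
have c0 : 0 <= c by exact: powR_ge0.
lra.
Qed.
End Helpers_U.

Section Helpers_V.
Local Open Scope classical_set_scope.

Context {R : realType}.

Lemma vec_lip (d : nat) (x : nat -> R) (t t' : R) :
  `|vec d (fun i => if i == 0%N then t else x i) -
    vec d (fun i => if i == 0%N then t' else x i)| <= `|t - t'|.
Proof.
set r := `|t - t'|; have r0 : 0 <= r by exact: normr_ge0.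
rewrite /Num.norm /= mx_normrE.
elim/big_ind: _ => //.
- move=> a b ha hb; rewrite /Num.max; by case: ifP.
- move=> [i j] _ /=; rewrite !mxE; case: ifP => _ //.
  by rewrite subrr normr0.
Qed.

Lemma sq_le_pow2 (n : nat) : (4 <= n)%N -> (n * n <= 2 ^ n)%N.
Proof.
elim: n => [//|n IH]; rewrite leq_eqVlt => /orP[/eqP <-//|].
rewrite ltnS => n4; have h := IH n4; rewrite expnS.
apply: (@leq_trans (2 * (n * n))%N); last by rewrite leq_mul2l.
clear h IH; nia.
Qed.

Lemma half_powR (p : R) : (2^-1 : R) `^ p = 2 `^ (- p).
Proof.
have h := @powRM R 2 (2^-1) p; rewrite divff ?pnatr_eq0 // powR1 in h.
rewrite powRN; apply: (@mulfI _ (2 `^ p)); first by rewrite gt_eqF // powR_gt0.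
by rewrite -h ?divff // gt_eqF // powR_gt0.
Qed.

End Helpers_V.

Theorem lemma3p5 (R : realType) (d : nat) (p : R) (f : 'rV[R]_d -> R) :
  (2 <= d)%N -> 1 <= p -> W1inf f ->
  exists N0 : nat, (0 < N0)%N /\
    exists n0 : nat, forall n : nat, (n0 <= n)%N ->
      (((2 : R) `^ (- (d%:R / p) * N0%:R - 2))%:E <=
       Lp_norm_cube d p (2 * pi / 2 ^+ N0)
         (fun x => cos (lambda_seq n * (x 0%N - t_seq n * f (vec d x)))))%E.
Proof.
move=> d2 p1 [_ [K0 HK0]].
set K := `|K0| + 1.
have Kpos : 0 < K by rewrite /K ltr_pwDr.
have HK : forall x y, `|f x - f y| <= K * `|x - y|.
  move=> x y; apply: le_trans (HK0 x y) _; rewrite ler_wpM2r //.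
  by rewrite /K (le_trans (ler_norm K0)) // lerDl.
have pi0 := @pi_gt0 R.
have pi4 : pi <= 4 :> R.
  by have /andP[_ h] := @pihalf_02 R; rewrite -(@ler_pM2r _ 2^-1) // (le_trans (ltW h)) //; lra.
destruct d as [|d]; first by [].
exists 1%N; split => //.
exists (maxn (maxn 4 (Num.bound (20 * K))) (Num.bound p)) => n hn.
have [hn4 hnK hnp] : [/\ (4 <= n)%N, 20 * K < n%:R & p < n%:R].
  move: hn; rewrite !geq_max => /andP[/andP[h4 hK] hp]; split => //.
  - apply: lt_le_trans (archi_boundP _) _; first by rewrite mulr_ge0 // ltW.
    by rewrite ler_nat.
  - apply: lt_le_trans (archi_boundP _) _; first by rewrite (le_trans _ p1).
    by rewrite ler_nat.
set lam := lambda_seq n; set tau := t_seq n.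
set c := (2^-1 : R) `^ p.
set P : R := 2 ^+ n; set N : R := n%:R.
have P0 : 0 < P by rewrite /P exprn_gt0.
have N0 : 0 <= N by rewrite /N ler0n.
have NN : N * N <= P.
  by rewrite /N /P -natrM -(natrX R 2 n) ler_nat sq_le_pow2.
have lam0 : 0 < lam by rewrite /lam /lambda_seq mulr_gt0.
have tau0 : 0 <= tau.
  by rewrite /tau /t_seq divr_ge0 ?exprn_ge0 // !mulr_ge0 // ltW.
have Hs1 : lam * tau * K * (pi / (2 * lam)) <= 3 / 10.
  have -> : lam * tau * K * (pi / (2 * lam)) = (4 / 11) * (pi * pi * (K * N)) / P.
    rewrite /lam /tau /lambda_seq /t_seq -/P -/N; field; by rewrite gt_eqF.
  rewrite ler_pdivrMr //.
  have h1 : pi * pi <= 16 :> R.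
    have h := ler_pM (ltW pi0) (ltW pi0) pi4 pi4; lra.
  have h2 : 20 * (K * N) <= N * N by have := ler_wpM2r N0 (ltW hnK); rewrite mulrA.
  have h3 : pi * pi * (K * N) <= 16 * (K * N) by rewrite ler_wpM2r // mulr_ge0 // ltW.
  lra.
have Hs2 : pi / (2 * lam) <= c * pi / 2.
  have hc : P^-1 <= c.
    rewrite /c; apply: le_trans (ger_powR _ (ltW hnp)).
      by rewrite powR_mulrn // exprVn.
    by rewrite invr_gt0 ltr0n /= invf_le1 // ler1n.
  have -> : pi / (2 * lam) = 4 / 11 * (pi * P^-1).
    rewrite /lam /lambda_seq -/P; field; by rewrite gt_eqF.
  have := ler_wpM2l (ltW pi0) hc; have : 0 <= pi * P^-1 by rewrite mulr_ge0 // ?invr_ge0 ltW.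
  lra.
rewrite (_ : 2 * pi / 2 ^+ 1 = pi); last by rewrite expr1; field.
rewrite /Lp_norm_cube.
have m0 : 0 <= c / 4 * pi by rewrite mulr_ge0 ?divr_ge0 ?powR_ge0 // ltW.
have Hcube := @cube_lb R 0 pi (c / 4 * pi) d
  (fun x => ((`|cos (lam * (x 0%N - tau * f (vec d.+1 x)))|) `^ p)%:E) pi0 m0.
have Hin : forall x : nat -> R, ((c / 4 * pi)%:E <= (\int[lebesgue_measure]_(t in `[0%R, pi])
   (fun x0 : nat -> R => ((`|cos (lam * (x0 0%N - tau * f (vec d.+1 x0)))|) `^ p)%:E)
     (fun i : nat => if i == 0%N then t else x i)))%E.
  move=> x.
  apply: (@oneD R p K lam tau (fun t => f (vec d.+1 (fun i => if i == 0%N then t else x i)))) => //.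
  move=> t t'; apply: le_trans (HK _ _) _; apply: ler_wpM2l; first exact: ltW.
  exact: vec_lip.
have {}Hcube := Hcube Hin.
have p0 : 0 < p by rewrite (lt_le_trans _ p1).
have V0 : 0 <= c / 4 * pi * (pi - 0) ^+ d by rewrite mulr_ge0 // exprn_ge0 // subr0 ltW.
apply: (@le_trans _ _ (((c / 4 * pi * (pi - 0) ^+ d)%:E) `^ p^-1)%E); last first.
  apply: gt0_ler_poweR => //; first by rewrite invr_ge0 ltW.
  - by rewrite in_itv /= lee_fin V0 leey.
  - by rewrite in_itv /= (le_trans _ Hcube) ?lee_fin // leey.
rewrite poweR_EFin lee_fin.
set A := 2 `^ (- (d.+1%:R / p) * 1 - 2).
have -> : A = (A `^ p) `^ p^-1.
  by rewrite -powRrM mulfV ?gt_eqF // powRr1 // powR_ge0.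
apply: ge0_ler_powR; rewrite ?nnegrE ?invr_ge0 ?powR_ge0 ?(ltW p0) //.
rewrite /A -powRrM.
have -> : (- (d.+1%:R / p) * 1 - 2) * p = - p + (- p + - d.+1%:R).
  by field; rewrite gt_eqF.
rewrite powRD ?pnatr_eq0 ?implybT // powRD ?pnatr_eq0 ?implybT // subr0 /c half_powR.
set a := 2 `^ (- p); set b := 2 `^ (- d.+1%:R); set Q := pi ^+ d.
have a0 : 0 < a by rewrite powR_gt0.
have a1 : a <= 2^-1.
  rewrite /a -powR_inv1 //; apply: ler_powR; [by rewrite ler1n | by rewrite lerN2].
have b0 : 0 <= b by rewrite powR_ge0.
have b1 : b <= 1.
  rewrite /b powRN invf_le1 ?powR_gt0 //.
  apply: (@le_trans _ _ 2); first by rewrite ler1n.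
  apply: le1r_powR; by rewrite ?ler1n.
have q1 : 1 <= Q by rewrite /Q exprn_ege1 // (le_trans _ (@pi_ge2 R)) // ler1n.
have pi2 := @pi_ge2 R.
have e1 : a * b <= 2^-1 * 1 by rewrite ler_pM // ltW.
have e2 : 2 * 1 <= pi * Q by rewrite ler_pM.
have e3 := ler_wpM2l (ltW a0) e1.
have e4 := ler_wpM2l (ltW a0) e2.
lra.
Qed.
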